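(* Let $n$, $k$, $t$ be positive integers with $k\geq t+3$ and $n\geq 2k+1+\delta_{2,q}$. For positive integers $x$ define $$g(n,k,t,x)={x-t\brack 1}{n-t-1\brack k-t-1}+q^{x-t}{k-x+1\brack 1}{k-t+1\brack 1}{n-t-2\brack k-t-2}+q^{x-t}{k-x+1\brack 1}+q^{x-t+1}{t\brack 1}{k-t\brack 1}{n-x\brack k-x}+2.$$ Then $g(n,k,t,x)<g(n,k,t,x+1)$ for every $x\in\{t+2,\ldots,k-1\}$.
   Context: $q$ is a prime power and ${m\brack r}$ denotes the Gaussian binomial coefficient $\prod_{i=0}^{r-1}\frac{q^{m-i}-1}{q^{r-i}-1}$ (equal to $1$ for $r=0$). $\delta_{a,b}$ is the Kronecker delta. *)

(* Defs.v *)
From mathcomp Require Import all_boot all_order all_algebra.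
Set Implicit Arguments. Unset Strict Implicit. Unset Printing Implicit Defensive.
Import GRing.Theory Num.Theory.
Local Open Scope ring_scope.

Definition gbin (q m r : nat) : rat :=
  \prod_(i < r) (((q%:Q) ^+ (m - i)%N - 1) / ((q%:Q) ^+ (r - i)%N - 1)).

Definition prime_power (q : nat) : Prop := exists p e : nat, prime p /\ (0 < e)%N /\ q = (p ^ e)%N.

(* g(n,k,t,x) from the paper; natural-number subtractions here are all nonnegative
   in the range of use (t+2 <= x <= k). *)
Definition gfun (q n k t x : nat) : rat :=
  gbin q (x - t) 1 * gbin q (n - t - 1) (k - t - 1)
  + (q%:Q) ^+ (x - t) * gbin q (k - x + 1) 1 * gbin q (k - t + 1) 1 * gbin q (n - t - 2) (k - t - 2)
  + (q%:Q) ^+ (x - t) * gbin q (k - x + 1) 1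
  + (q%:Q) ^+ (x - t + 1) * gbin q t 1 * gbin q (k - t) 1 * gbin q (n - x) (k - x)
  + 2.

(* Main.v *)
Require Import Defs.
From mathcomp Require Import all_boot all_order all_algebra.
From mathcomp Require Import zify ring lra.
Import Order.TTheory GRing.Theory Num.Theory.
Local Open Scope ring_scope.

Lemma gbin1 q m : gbin q m 1 = ((q%:Q) ^+ m - 1) / ((q%:Q) - 1).
Proof. by rewrite /gbin big_ord1 /= subn0 expr1. Qed.

Lemma gbinS q m r : gbin q m.+1 r.+1 =
  ((q%:Q) ^+ m.+1 - 1) / ((q%:Q) ^+ r.+1 - 1) * gbin q m r.
Proof. by rewrite /gbin big_ord_recl /= !subn0. Qed.

Lemma fact_ge1 (Q : rat) m r : 1 < Q -> (r <= m)%N ->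
  1 <= (Q ^+ m.+1 - 1) / (Q ^+ r.+1 - 1).
Proof.
move=> hQ hrm.
have h1 : 1 < Q ^+ r.+1 by rewrite exprn_egt1.
have h2 : Q ^+ r.+1 <= Q ^+ m.+1 by rewrite ler_eXn2l // ltW.
rewrite ler_pdivlMr ?subr_gt0 // mul1r; lra.
Qed.

Lemma gbin_ge1 q m r : (1 < q)%N -> (r <= m)%N -> 1 <= gbin q m r.
Proof.
move=> hq; elim: r m => [|r IH] [|m] //= hrm.
- by rewrite /gbin big_ord0.
- by rewrite /gbin big_ord0.
rewrite gbinS.
have hQ : 1 < q%:Q by rewrite ltr1n.
rewrite ltnS in hrm; have := @fact_ge1 _ m r hQ hrm; have := IH m hrm.
move=> a b; rewrite -[1]mulr1; apply: ler_pM => //; lra.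
Qed.

Lemma gbin_mono q b j a : (1 < q)%N -> (j <= a)%N -> gbin q (j + b) j <= gbin q (a + b) a.
Proof.
move=> hq; elim: a => [|a IH].
  by rewrite leqn0 => /eqP ->.
rewrite leq_eqVlt => /orP [/eqP -> //|].
rewrite ltnS => hja; apply: le_trans (IH hja) _.
rewrite addSn gbinS.
have hQ : 1 < q%:Q by rewrite ltr1n.
have := @fact_ge1 _ (a+b) a hQ (leq_addr b a); have := @gbin_ge1 q (a+b) a hq (leq_addr b a).
move=> u v; rewrite -{1}[gbin q (a+b) a]mul1r; apply: ler_pM => //; lra.
Qed.

Lemma divle (a z : rat) : 0 <= a -> 2 <= z -> a / z <= a / 2.
Proof.
move=> ha hz; rewrite ler_pdivrMr; last by lra.
nra.
Qed.

Lemma Ebound (Q B p r : rat) : 1 < Q -> Q <= p -> 1 <= r ->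
  (Q = 2 -> 2 * Q * p * r <= B) -> (Q <> 2 -> 3 <= Q) -> Q * p * r <= B ->
  1 < B - (Q * p - 1) / (Q - 1) - Q * ((r - 1) / (Q - 1) * ((p - 1) / (Q - 1))).
Proof.
move=> hQ hp hr h2 h3 hB.
have [e2|ne2] := eqVneq Q 2.
  have := h2 e2; rewrite e2 => hB2.
  have -> : (2 - 1 : rat) = 1 by [].
  rewrite !divr1. subst Q. nra.
have hQ3 : 3 <= Q by apply: h3 => e2; rewrite e2 eqxx in ne2.
have u1 := @divle (Q * p - 1) (Q - 1) ltac:(nra) ltac:(lra).
have u2 := @divle (r - 1) (Q - 1) ltac:(nra) ltac:(lra).
have u3 := @divle (p - 1) (Q - 1) ltac:(nra) ltac:(lra).
have v2 : 0 <= (r - 1) / (Q - 1) by apply: divr_ge0; lra.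
have v3 : 0 <= (p - 1) / (Q - 1) by apply: divr_ge0; lra.
have w : (r - 1) / (Q - 1) * ((p - 1) / (Q - 1)) <= (r - 1) / 2 * ((p - 1) / 2).
  apply: ler_pM => //.
have w' : Q * ((r - 1) / (Q - 1) * ((p - 1) / (Q - 1))) <= Q * ((r - 1) / 2 * ((p - 1) / 2)).
  apply: ler_wpM2l => //; lra.
have f1 : Q * p <= Q * p * r by rewrite ler_peMr //; nra.
have f2 : Q <= Q * r by rewrite ler_peMr //; lra.
have f3 : 9 <= Q * p * r by nra.
have f4 : 0 <= Q * p by nra.
nra.
Qed.

Theorem lemma2p4 (q n k t : nat) :
  prime_power q -> (0 < n)%N -> (0 < k)%N -> (0 < t)%N ->
  (t + 3 <= k)%N -> (2 * k + 1 + (q == 2%N) <= n)%N ->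
  forall x : nat, (t + 2 <= x)%N -> (x <= k - 1)%N ->
  gfun q n k t x < gfun q n k t x.+1.
Proof.
move=> [p [e [pp [e0 ->]]]] _ _ t0 htk hn x hx hxk.
have hq : (1 < p ^ e)%N by rewrite -(exp1n e) ltn_exp2r // prime_gt1.
move: hn hq; clear pp e0; move: (p ^ e)%N => qq hn hq.
have [c Ec] : exists c, x = (t + c + 2)%N by exists (x - t - 2)%N; lia.
subst x.
have [j Ej] : exists j, k = (t + c + j + 3)%N by exists (k - t - c - 3)%N; lia.
subst k.
have [b Eb] : exists b, n = (t + c + j + 3 + b)%N by exists (n - (t + c + j + 3))%N; lia.
subst n.
rewrite /gfun.
have -> : (t + c + 2 - t + 1 = c + 3)%N by lia.
have -> : ((t + c + 2).+1 - t + 1 = c + 4)%N by lia.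
have -> : (t + c + 2 - t = c + 2)%N by lia.
have -> : (t + c + j + 3 + b - t - 1 = (c + j + 1 + b).+1)%N by lia.
have -> : (t + c + j + 3 - t - 1 = (c + j + 1).+1)%N by lia.
have -> : (t + c + j + 3 - (t + c + 2) + 1 = j + 2)%N by lia.
have -> : (t + c + j + 3 - t + 1 = c + j + 4)%N by lia.
have -> : (t + c + j + 3 + b - t - 2 = c + j + 1 + b)%N by lia.
have -> : (t + c + j + 3 - t - 2 = c + j + 1)%N by lia.
have -> : (t + c + j + 3 - t = c + j + 3)%N by lia.
have -> : (t + c + j + 3 + b - (t + c + 2) = j.+1 + b)%N by lia.
have -> : (t + c + j + 3 - (t + c + 2) = j.+1)%N by lia.
have -> : ((t + c + 2).+1 - t = c + 3)%N by lia.
have -> : (t + c + j + 3 - (t + c + 2).+1 + 1 = j + 1)%N by lia.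
have -> : (t + c + j + 3 + b - (t + c + 2).+1 = j + b)%N by lia.
have -> : (t + c + j + 3 - (t + c + 2).+1 = j)%N by lia.
have hQ : 1 < qq%:Q by rewrite ltr1n.
move: hQ; set Q := (qq%:Q) => hQ.
have eQ : Q = qq%:R := erefl.
set A := gbin qq (c + j + 1 + b).+1 (c + j + 1).+1.
set C := gbin qq (c + j + 1 + b) (c + j + 1).
set G := gbin qq (j.+1 + b) j.+1.
set G' := gbin qq (j + b) j.
set Lt := gbin qq t 1.
set L3 := gbin qq (c + j + 3) 1.
set L4 := gbin qq (c + j + 4) 1.
have hC : 1 <= C by rewrite /C; apply: gbin_ge1 => //; lia.
have hA : Q ^+ b * C <= A.
  rewrite /A gbinS -/C; apply: ler_wpM2r; first lra.
  rewrite ler_pdivlMr; last by rewrite subr_gt0 exprn_egt1.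
  have -> : ((c + j + 1 + b).+1 = (c + j + 1).+1 + b)%N by lia.
  rewrite exprD -/Q.
  have : 1 <= Q ^+ b by rewrite exprn_ege1 // ltW.
  have : 1 < Q ^+ (c + j + 1).+1 by rewrite exprn_egt1.
  nra.
have hG : G <= C by rewrite /G /C; apply: gbin_mono => //; lia.
have hG' : 0 <= G' by rewrite /G'; have := @gbin_ge1 qq (j + b) j hq (leq_addr b j); lra.
have hLt : 1 <= Lt by rewrite /Lt; apply: gbin_ge1.
have hL3 : 1 <= L3 by rewrite /L3; apply: gbin_ge1; lia.
have hE : 1 < Q ^+ b - L4 - Q * Lt * L3.
  rewrite /L4 /Lt /L3 !gbin1 -/Q.
  have -> : (c + j + 4 = (c + j + 3).+1)%N by lia.
  rewrite exprS.
  have p1 : Q <= Q ^+ (c + j + 3) by rewrite -[X in X <= _]expr1 ler_eXn2l //; lia.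
  have p2 : 1 <= Q ^+ t by rewrite exprn_ege1 // ltW.
  have hB : Q * Q ^+ (c + j + 3) * Q ^+ t <= Q ^+ b.
    by rewrite -exprS -exprD ler_eXn2l //; move: hn; case: (qq == 2%N) => /=; lia.
  have p4 : Q = 2 -> 2 * Q * Q ^+ (c + j + 3) * Q ^+ t <= Q ^+ b.
    move=> Q2; have q2 : qq = 2%N by apply/eqP; rewrite -(eqr_nat rat) -eQ Q2.
    have hn2 : (2 * (t + c + j + 3) + 2 <= t + c + j + 3 + b)%N by move: hn; rewrite q2 eqxx /=; lia.
    have : Q * (Q * Q ^+ (c + j + 3)) * Q ^+ t <= Q ^+ b.
      by rewrite -!exprS -exprD ler_eXn2l //; lia.
    by rewrite Q2 !mulrA.
  have p5 : Q <> 2 -> 3 <= Q.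
    move=> Q2; have : qq != 2%N by apply/eqP => q2; apply: Q2; rewrite eQ q2.
    rewrite eQ ler_nat; lia.
  have EB := @Ebound _ _ _ _ hQ p1 p2 p4 p5 hB; lra.
set inner := A - L4 * C - 1 - Q * Lt * L3 * G.
have key : (gbin qq (c + 3) 1 * A + Q ^+ (c + 3) * gbin qq (j + 1) 1 * L4 * C
    + Q ^+ (c + 3) * gbin qq (j + 1) 1 + Q ^+ (c + 4) * Lt * L3 * G' + 2)
  - (gbin qq (c + 2) 1 * A + Q ^+ (c + 2) * gbin qq (j + 2) 1 * L4 * C
    + Q ^+ (c + 2) * gbin qq (j + 2) 1 + Q ^+ (c + 3) * Lt * L3 * G + 2)
  = Q ^+ (c + 2) * inner + Q ^+ (c + 3) * Lt * L3 * Q * G'.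
  rewrite /inner !gbin1 -/Q !exprD.
  have hQ1 : Q - 1 != 0 by rewrite subr_eq0 gt_eqF.
  field => //.
have f1 : Q * Lt * L3 * G <= Q * Lt * L3 * C.
  have f0 : 0 <= Q * Lt by apply: mulr_ge0; lra.
  have f0' : 0 <= Q * Lt * L3 by apply: mulr_ge0; lra.
  by apply: ler_wpM2l.
have f2 : 0 <= (C - 1) * (Q ^+ b - L4 - Q * Lt * L3) by apply: mulr_ge0; lra.
have hin : 0 < inner by rewrite /inner; nra.
have hP : 0 < Q ^+ (c + 2) by apply: exprn_gt0; lra.
have h1 := mulr_gt0 hP hin.
have h2 : 0 <= Q ^+ (c + 3) * Lt * L3 * Q * G'.
  apply: mulr_ge0 => //; apply: mulr_ge0; last lra.
  apply: mulr_ge0; last lra; apply: mulr_ge0; last lra.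
  apply: exprn_ge0; lra.
lra.
Qed.
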